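(* Let $A$ be a finite set and let $(v_{xy})$ be a Llull matrix on $A$ with CLC structure that is not identically zero. Then $A$ has a top dominant irreducible component $X$ (for $(v_{xy})$), and moreover $v_{xy}>0$ for every $x\in X$ and every $y\in A$ with $y\neq x$.
   Context: A Llull matrix on a finite set $A$ is an assignment to each ordered pair of distinct elements $x\neq y$ of $A$ of a number $v_{xy}\in[0,1]$ such that $v_{xy}+v_{yx}\le 1$. Turnouts: $t_{xy}=v_{xy}+v_{yx}$; margins: $m_{xy}=v_{xy}-v_{yx}$. The matrix has CLC structure if there is a total order $\xi$ on $A$ such that, writing $x<_\xi y$ when $x$ precedes $y$ and $x'$ for the immediate successor of $x$ in $\xi$ (when it exists): (i) $v_{xy}\ge v_{yx}$ whenever $x<_\xi y$; (ii) $v_{xz}=\max(v_{xy},v_{yz})$ whenever $x<_\xi y<_\xi z$; (iii) $v_{zx}=\min(v_{zy},v_{yx})$ whenever $x<_\xi y<_\xi z$; (iv) $0\le t_{xz}-t_{x'z}\le m_{xx'}$ whenever $x'$ exists and $z\notin\{x,x'\}$. Indirect scores: for $x\neq y$, $\hat v_{xy}=\max$ over all paths $x=x_0,x_1,\dots,x_n=y$ of elements of $A$ (consecutive elements distinct) of $\min_{0\le i<n} v_{x_ix_{i+1}}$. Write $x\sim y$ iff $x=y$ or ($\hat v_{xy}>0$ and $\hat v_{yx}>0$); this is an equivalence relation whose classes are the irreducible components of $A$. Say $x$ dominates $y$ iff $\hat v_{xy}>0$ and $\hat v_{yx}=0$; this relation is compatible with $\sim$, so an irreducible component $C$ dominates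 a component $D$ iff some (equivalently every) $x\in C$ dominates some (equivalently every) $y\in D$. A top dominant irreducible component is an irreducible component that dominates every other irreducible component. *)

(* Defs.v *)
From HB Require Import structures.
From mathcomp Require Import all_boot all_order all_algebra.
From mathcomp Require Import all_classical all_reals.
Set Implicit Arguments. Unset Strict Implicit. Unset Printing Implicit Defensive.
Import Order.TTheory GRing.Theory Num.Theory.
Local Open Scope ring_scope.
Local Open Scope classical_set_scope.

Section Llull.
Variables (R : realType) (A : finType) (v : A -> A -> R).

Definition llull_matrix : Prop :=
  forall x y : A, x != y -> [/\ 0 <= v x y, v x y <= 1 & v x y + v y x <= 1].

Definition turnout (x y : A) : R := v x y + v y x.
Definition margin (x y : A) : R := v x y - v y x.

(* A total order xi on A is given by a duplicate-free enumeration s of A: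
   x <_xi y iff index x s < index y s; the immediate successor of the item
   at position i is the item at position i+1. *)
Definition total_order_enum (s : seq A) : Prop := uniq s /\ forall x, x \in s.

Definition clc_order (s : seq A) : Prop :=
  let lt x y := (index x s < index y s)%N in
  [/\ total_order_enum s,
      (forall x y, lt x y -> v y x <= v x y),
      (forall x y z, lt x y -> lt y z -> v x z = Num.max (v x y) (v y z)),
      (forall x y z, lt x y -> lt y z -> v z x = Num.min (v z y) (v y x)) &
      (forall (i : nat) (z : A), (i.+1 < size s)%N ->
         let x := nth z s i in let x' := nth z s i.+1 in
         z != x -> z != x' ->
         0 <= turnout x z - turnout x' z /\
         turnout x z - turnout x' z <= margin x x')].

Definition clc_structure : Prop := exists s : seq A, clc_order s.

(* Paths x = x_0, x_1, ..., x_n = y (n >= 1), consecutive elements distinct;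
   represented by x and the nonempty tail [:: x_1; ...; x_n]. *)
Definition is_path_from_to (x y : A) (p : seq A) : Prop :=
  [/\ p != [::], path (fun a b => a != b) x p & last x p = y].

(* min_{0 <= i < n} v_{x_i x_{i+1}} (the neutral element 1 is never used
   alone since paths are nonempty, and all entries are <= 1). *)
Definition path_min (x : A) (p : seq A) : R :=
  \big[Num.min/1]_(e <- zip (x :: p) p) v e.1 e.2.

(* Indirect score: maximum over all paths (the set of path values is finite,
   so the sup is attained and is the max). *)
Definition indirect (x y : A) : R :=
  sup [set path_min x p | p in [set p | is_path_from_to x y p]].

Definition equiv_ind (x y : A) : Prop :=
  x = y \/ (0 < indirect x y /\ 0 < indirect y x).

Definition dominates (x y : A) : Prop :=
  0 < indirect x y /\ indirect y x = 0.

Definition irreducible_component (C : set A) : Prop :=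
  exists x0 : A, C = [set y | equiv_ind x0 y].

Definition comp_dominates (C D : set A) : Prop :=
  exists x y, C x /\ D y /\ dominates x y.

Definition top_dominant_component (X : set A) : Prop :=
  irreducible_component X /\
  forall D, irreducible_component D -> D <> X -> comp_dominates X D.

End Llull.

(* Main.v *)
Require Import Defs.
From HB Require Import structures.
From mathcomp Require Import all_boot all_order all_algebra.
From mathcomp Require Import all_classical all_reals.
From mathcomp Require Import lra zify.
Set Implicit Arguments. Unset Strict Implicit. Unset Printing Implicit Defensive.
Import Order.TTheory GRing.Theory Num.Theory.
Local Open Scope ring_scope.
Local Open Scope classical_set_scope.

Section Gen.
Variables (R : realType) (A : finType) (v : A -> A -> R).

Lemma path_min_le1 (x : A) p : path_min v x p <= 1.
Proof.
rewrite /path_min; elim: p x => [|y p IH] x /=; first by rewrite big_nil.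
by rewrite big_cons ge_min IH orbT.
Qed.

Lemma path_min1 (x y : A) : path_min v x [:: y] = Num.min (v x y) 1.
Proof. by rewrite /path_min /= big_cons big_nil. Qed.

Lemma path1 (x y : A) : x != y -> is_path_from_to x y [:: y].
Proof. by move=> h; split => //=; rewrite andbT. Qed.

Lemma ind_pos (x y : A) : x != y -> 0 < v x y -> 0 < indirect v x y.
Proof.
move=> hxy hv; rewrite /indirect.
set S := [set _ | _ in _].
have Sy : S (path_min v x [:: y]) by exists [:: y] => //; apply: path1.
have hs : has_sup S.
  split; first by exists (path_min v x [:: y]).
  by exists 1 => r [p _ <-]; apply: path_min_le1.
apply: lt_le_trans (sup_upper_bound hs Sy).
by rewrite path_min1 lt_min hv ltr01.
Qed.

Lemma ind_zero (x y : A) : x != y -> v x y = 0 ->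
  (forall p, is_path_from_to x y p -> path_min v x p <= 0) ->
  indirect v x y = 0.
Proof.
move=> hxy hv H; rewrite /indirect.
set S := [set _ | _ in _].
have Sy : S (path_min v x [:: y]) by exists [:: y] => //; apply: path1.
have hs : has_sup S.
  split; first by exists (path_min v x [:: y]).
  by exists 1 => r [p _ <-]; apply: path_min_le1.
apply/eqP; rewrite eq_le; apply/andP; split.
  by apply: ge_sup; [exists (path_min v x [:: y]) | move=> r [p Hp <-]; apply: H].
apply: le_trans (sup_upper_bound hs Sy).
by rewrite path_min1 hv le_min lexx ler01.
Qed.

Lemma pm_cross (Q : pred A) :
  (forall a b, ~~ Q a -> Q b -> v a b = 0) ->
  forall p x, ~~ Q x -> Q (last x p) -> path_min v x p <= 0.
Proof.
move=> HQ; elim => [|y p IH] x /= hx hl; first by rewrite hl in hx.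
rewrite /path_min /= big_cons ge_min.
case hy: (Q y).
  by rewrite (HQ x y hx hy) lexx.
by apply/orP; right; apply: IH => //; rewrite hy.
Qed.

End Gen.

Section CLC.
Variables (R : realType) (A : finType) (v : A -> A -> R).
Hypothesis Hll : llull_matrix v.
Variable s : seq A.
Hypothesis Hclc : clc_order v s.
Variable x0 : A.
Hypothesis Hnz : exists x y : A, x != y /\ v x y != 0.

Let f i := nth x0 s i.
Let n := size s.

Lemma Hus : uniq s. Proof. by case: Hclc => [[]]. Qed.
Lemma Hin y : y \in s. Proof. by case: Hclc => [[]]. Qed.
Lemma f_index y : f (index y s) = y. Proof. exact: nth_index (Hin y). Qed.
Lemma index_f i : (i < n)%N -> index (f i) s = i.
Proof. by move=> h; apply: index_uniq h Hus. Qed.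
Lemma index_lt y : (index y s < n)%N. Proof. by rewrite index_mem Hin. Qed.
Lemma n_pos : (0 < n)%N. Proof. by have := index_lt x0; lia. Qed.
Lemma f_neq i j : (i < n)%N -> (j < n)%N -> i != j -> f i != f j.
Proof.
move=> hi hj hij; apply/negP => /eqP e.
by move: hij; rewrite -(index_f hi) -(index_f hj) e eqxx.
Qed.

Lemma nonneg i j : (i < n)%N -> (j < n)%N -> i != j -> 0 <= v (f i) (f j).
Proof. by move=> hi hj hij; case: (Hll (f_neq hi hj hij)). Qed.

Lemma P1 i j : (i < j)%N -> (j < n)%N -> v (f j) (f i) <= v (f i) (f j).
Proof.
move=> hij hj; case: Hclc => _ H _ _ _; apply: H.
by rewrite !index_f //; lia.
Qed.

Lemma P2 i j l : (i < j)%N -> (j < l)%N -> (l < n)%N ->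
  v (f i) (f l) = Num.max (v (f i) (f j)) (v (f j) (f l)).
Proof.
move=> h1 h2 h3; case: Hclc => _ _ H _ _; apply: H; rewrite !index_f //; lia.
Qed.

Lemma P3 i j l : (i < j)%N -> (j < l)%N -> (l < n)%N ->
  v (f l) (f i) = Num.min (v (f l) (f j)) (v (f j) (f i)).
Proof.
move=> h1 h2 h3; case: Hclc => _ _ _ H _; apply: H; rewrite !index_f //; lia.
Qed.

Lemma P4 i z : (i.+1 < n)%N -> z != f i -> z != f i.+1 ->
  0 <= turnout v (f i) z - turnout v (f i.+1) z /\
  turnout v (f i) z - turnout v (f i.+1) z <= margin v (f i) (f i.+1).
Proof.
move=> h h1 h2; case: Hclc => _ _ _ _ H.
have := H i z h; rewrite /= /f.
rewrite !(set_nth_default x0 z) //; last by lia.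
by move=> H'; apply: H'.
Qed.

Definition Pb i := v (f i.+1) (f i) == 0.
Definition K := find Pb (iota 0 n.-1).

Lemma K_le : (K <= n.-1)%N.
Proof. by have := find_size Pb (iota 0 n.-1); rewrite size_iota. Qed.

Lemma bK : (K < n.-1)%N -> v (f K.+1) (f K) = 0.
Proof.
move=> h; apply/eqP.
have hh : has Pb (iota 0 n.-1) by rewrite has_find size_iota.
by have := nth_find 0 hh; rewrite -/K nth_iota.
Qed.

Lemma bpos i : (i < K)%N -> 0 < v (f i.+1) (f i).
Proof.
move=> h; have := before_find 0 h; rewrite nth_iota; last by have := K_le; lia.
rewrite /Pb add0n => /negbT hne.
have hn := n_pos; have := K_le => hk.
rewrite lt_def hne /=; apply: nonneg; lia.
Qed.

Lemma all_zero : (forall j, (0 < j < n)%N -> v (f 0) (f j) = 0) -> False.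
Proof.
move=> H0; case: Hnz => x [y [hxy hv]].
have Z : forall i j, (i < j)%N -> (j < n)%N -> v (f i) (f j) = 0.
  move=> i j hij hj; case: i hij => [|i] hij; first by apply: H0; lia.
  have := P2 (i := 0) (j := i.+1) (l := j) isT hij hj.
  rewrite H0; last by lia.
  move=> e; apply/eqP; rewrite eq_le nonneg //; last by lia.
  by rewrite e le_max lexx orbT.
  by lia.
move: hv; rewrite -(f_index x) -(f_index y).
have hx := index_lt x; have hy := index_lt y.
have hne : index x s != index y s.
  by apply/negP => /eqP e; move: hxy; rewrite -(f_index x) -(f_index y) e eqxx.
case: (ssrnat.ltngtP (index x s) (index y s)) => h.
- move=> hv; apply: (negP hv); apply/eqP; exact: Z.
- move=> hv; apply: (negP hv).
  have hle := P1 h hx; rewrite (Z _ _ h hx) in hle.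
  have hge : 0 <= v (f (index x s)) (f (index y s)) by apply: nonneg => //.
  by rewrite eq_le hle hge.
- by rewrite h eqxx in hne.
Qed.

Lemma key : (K < n.-1)%N -> 0 < v (f K) (f K.+1).
Proof.
move=> hK; have hn := n_pos.
case hK0 : K => [|k].
  rewrite lt_def nonneg ?andbT //; try lia.
  apply/negP => /eqP a0; apply: all_zero.
  elim => [|j IH] //; case: j IH => [|j] IH hj; first by rewrite a0.
  have IH' : v (f 0) (f j.+1) = 0 by apply: IH; lia.
  have [h1 _] := P4 (i := j.+1) (z := f 0) (ltac:(lia)) (@f_neq 0 j.+1 (ltac:(lia)) (ltac:(lia)) isT) (@f_neq 0 j.+2 (ltac:(lia)) (ltac:(lia)) isT).
  move: h1; rewrite /turnout IH'.
  have := P1 (i := 0) (j := j.+1) isT (ltac:(lia)); rewrite IH' => e1.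
  have e2 : 0 <= v (f j.+2) (f 0) by apply: nonneg; lia.
  have e3 : 0 <= v (f 0) (f j.+2) by apply: nonneg; lia.
  move=> h; apply/eqP; rewrite eq_le e3 andbT; lra.
have bk : 0 < v (f k.+1) (f k) by apply: bpos; lia.
have bK0 : v (f k.+2) (f k.+1) = 0 by rewrite -hK0; apply: bK.
have [_ h2] := P4 (i := k.+1) (z := f k) (ltac:(lia)) (@f_neq k k.+1 (ltac:(lia)) (ltac:(lia)) (ltac:(lia))) (@f_neq k k.+2 (ltac:(lia)) (ltac:(lia)) (ltac:(lia))).
move: h2; rewrite /turnout /margin.
rewrite (P3 (i := k) (j := k.+1) (l := k.+2)) ?ltnSn //; last by lia.
rewrite (P2 (i := k) (j := k.+1) (l := k.+2)) ?ltnSn //; last by lia.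
rewrite bK0.
have -> : Num.min 0 (v (f k.+1) (f k)) = 0 by apply/min_idPl; exact: ltW.
have ak : 0 <= v (f k) (f k.+1) by apply: nonneg; lia.
have aK : 0 <= v (f k.+1) (f k.+2) by apply: nonneg; lia.
have hm : Num.max (v (f k) (f k.+1)) (v (f k.+1) (f k.+2)) <= v (f k) (f k.+1) + v (f k.+1) (f k.+2).
  rewrite ge_max; apply/andP; split; lra.
move=> h; lra.
Qed.

Lemma L1 i j : (i < j)%N -> (j <= K)%N -> 0 < v (f j) (f i).
Proof.
move=> hij hjK.
have -> : j = (i + (j - i - 1).+1)%N by lia.
have : (i + (j - i - 1).+1 <= K)%N by lia.
elim: (j - i - 1)%N => [|d IH] hd.
  by rewrite addn1; apply: bpos; lia.
have hn := n_pos; have hk := K_le.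
rewrite (P3 (i := i) (j := (i + d.+1)%N)); try lia.
rewrite lt_min IH ?andbT; last by lia.
have -> : (i + d.+2 = (i + d.+1).+1)%N by lia.
by apply: bpos; lia.
Qed.

Lemma L2 i j : (i <= K)%N -> (K < j)%N -> (j < n)%N -> v (f j) (f i) = 0.
Proof.
move=> hi hj hjn.
have hK : (K < n.-1)%N by lia.
have e1 : v (f j) (f K) <= 0.
  case: (ssrnat.ltngtP j K.+1) => h; first by lia.
    rewrite (P3 (ltnSn K) h hjn).
    by rewrite ge_min bK // lexx orbT.
  by rewrite h bK.
have e2 : v (f j) (f i) <= v (f j) (f K).
  case: (ssrnat.ltngtP i K) => h; last by rewrite h.
    by rewrite (P3 h hj hjn) ge_min lexx.
  by lia.
apply/eqP; rewrite eq_le (le_trans e2 e1) /=; apply: nonneg; lia.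
Qed.

Lemma L3 i j : (i <= K)%N -> (K < j)%N -> (j < n)%N ->
  v (f K) (f K.+1) <= v (f i) (f j).
Proof.
move=> hi hj hjn.
have e1 : v (f K) (f K.+1) <= v (f K) (f j).
  case: (ssrnat.ltngtP j K.+1) => h; first by lia.
    by rewrite (P2 (ltnSn K) h hjn) le_max lexx.
  by rewrite h.
have e2 : v (f K) (f j) <= v (f i) (f j).
  case: (ssrnat.ltngtP i K) => h; last by rewrite h.
    by rewrite (P2 h hj hjn) le_max lexx orbT.
  by lia.
exact: le_trans e1 e2.
Qed.

Definition inX (y : A) : bool := (index y s <= K)%N.

Lemma idx_neq x y : x != y -> index x s != index y s.
Proof.
by move=> hxy; apply/negP => /eqP e; move: hxy; rewrite -(f_index x) -(f_index y) e eqxx.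
Qed.

Lemma E1 x y : inX x -> inX y -> x != y -> 0 < v x y.
Proof.
rewrite /inX => hx hy hxy; have hne := idx_neq hxy.
rewrite -(f_index x) -(f_index y).
have hxn := index_lt x; have hyn := index_lt y.
case: (ssrnat.ltngtP (index x s) (index y s)) => h.
- exact: lt_le_trans (L1 h hy) (P1 h hyn).
- exact: L1 h hx.
- by rewrite h eqxx in hne.
Qed.

Lemma E2 x y : inX x -> ~~ inX y -> 0 < v x y.
Proof.
rewrite /inX -ltnNge => hx hy.
rewrite -(f_index x) -(f_index y).
have hyn := index_lt y.
apply: lt_le_trans (L3 hx hy hyn); apply: key; lia.
Qed.

Lemma E3 x y : inX x -> ~~ inX y -> v y x = 0.
Proof.
rewrite /inX -ltnNge => hx hy.
rewrite -(f_index x) -(f_index y); exact: L2 hx hy (index_lt y).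
Qed.

Lemma ind0 x y : ~~ inX x -> inX y -> indirect v x y = 0.
Proof.
move=> hx hy.
have hxy : x != y by apply/negP => /eqP e; rewrite e hy in hx.
apply: ind_zero => //; first exact: E3.
move=> p [_ _ hl]; apply: (pm_cross (Q := inX)) => //; last by rewrite hl.
by move=> a b ha hb; apply: E3.
Qed.

Lemma classX w : inX w -> [set y | equiv_ind v w y] = [set y | inX y].
Proof.
move=> hw; apply/seteqP; split => y /=.
  case=> [<- //|[h1 h2]].
  apply/negPn/negP => hy.
  by move: h2; rewrite ind0 // ltxx.
move=> hy; case: (eqVneq w y) => [->|hne]; first by left.
right; split; apply: ind_pos => //; try by rewrite eq_sym.
  by apply: E1.
by apply: E1 => //; rewrite eq_sym.
Qed.

Lemma inX_f0 : inX (f 0).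
Proof. by rewrite /inX index_f //; exact: n_pos. Qed.

Lemma main_clc : exists X : set A, top_dominant_component v X /\
    (forall x y : A, X x -> y != x -> 0 < v x y).
Proof.
exists [set y | inX y]; split; last first.
  move=> x y /= hx hyx; case hy : (inX y).
    by apply: E1 => //; rewrite eq_sym.
  by apply: E2 => //; rewrite hy.
split.
  by exists (f 0); rewrite classX //; exact: inX_f0.
move=> D [x1 ->] hD.
case hx1 : (inX x1).
  by exfalso; apply: hD; rewrite classX.
exists (f 0), x1; split; first exact: inX_f0.
split; first by left.
have hf0 := inX_f0.
have hne : f 0 != x1 by apply/negP => /eqP e; rewrite -e hf0 in hx1.
split.
  by apply: ind_pos => //; apply: E2 => //; rewrite hx1.
by apply: ind0 => //; rewrite hx1.
Qed.

End CLC.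

Theorem proposition3p3 (R : realType) (A : finType) (v : A -> A -> R) :
  llull_matrix v -> clc_structure v ->
  (exists x y : A, x != y /\ v x y != 0) ->
  exists X : set A, top_dominant_component v X /\
    (forall x y : A, X x -> y != x -> 0 < v x y).
Proof.
move=> Hll [s Hclc] Hnz.
case: (Hnz) => a _.
exact: (main_clc Hll Hclc a Hnz).
Qed.
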